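(* Let $\mathcal{G}=(\mathcal{V},\mathcal{E})$ be a directed graph with $\mathcal{V}=[n]$, and consider the discrete-time networked SIR dynamics $$s_i[k+1]=s_i[k]-h s_i[k]\beta\sum_{j\in\bar{\mathcal{N}}_i}a_{ij}x_j[k],\quad x_i[k+1]=(1-h\delta)x_i[k]+h s_i[k]\beta\sum_{j\in\bar{\mathcal{N}}_i}a_{ij}x_j[k],\quad r_i[k+1]=r_i[k]+h\delta x_i[k]$$ for all $i\in\mathcal{V}$, $k\in\mathbb{Z}_{\ge0}$. Suppose that (i) for all $i\in\mathcal{V}$, $s_i[0]\in(0,1]$, $x_i[0]\in[0,1)$, $r_i[0]=0$ and $s_i[0]+x_i[0]=1$; and (ii) $h,\beta,\delta>0$ with $h\delta<1$, $a_{ij}>0$ for all $i\neq j$ with $(j,i)\in\mathcal{E}$, and $h\beta\sum_{j\in\bar{\mathcal{N}}_i}a_{ij}<1$ for all $i\in\mathcal{V}$. Then for every $i\in\mathcal{V}$ (with $k\in\mathbb{Z}_{\ge0}$): (a) $s_i[k]>0$ for all $k\ge0$; (b) if $d_i\neq+\infty$, then $x_i[k]=0$ for all $k<d_i$ and $x_i[k]\in(0,1)$ for all $k\ge d_i$; (c) if $d_i\neq+\infty$, then $r_i[k]=0$ for all $k\le d_i$ and $r_i[k]\in(0,1)$ for all $k>d_i$; (d) if $i\in\mathcal{S}_H$ and $d_i=+\infty$, then $x_i[k]=0$ and $r_i[k]=0$ for all $k\ge0$.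
   Context: A directed edge from node $j$ to node $i$ is written $(j,i)$; $\mathcal{E}$ may contain self-loops. $\mathcal{N}_i=\{j:(j,i)\in\mathcal{E}\}$ and $\bar{\mathcal{N}}_i=\mathcal{N}_i\cup\{i\}$. The weights satisfy $a_{ij}\ge0$, with $a_{ij}$ the weight associated with edge $(j,i)$. $s_i[k],x_i[k],r_i[k]$ are the susceptible, infected and recovered proportions at node $i$ and time $k$. A directed path of length $t$ from $i_0$ to $i_t$ is a sequence of edges $(i_0,i_1),\dots,(i_{t-1},i_t)$; for distinct $i,j$ with a path from $i$ to $j$, $d_{ij}$ is the shortest length of such a path. Define $\mathcal{S}_I=\{i\in\mathcal{V}:x_i[0]>0\}$ and $\mathcal{S}_H=\{i\in\mathcal{V}:x_i[0]=0\}$. For $i\in\mathcal{S}_I$, $d_i=0$; for $i\in\mathcal{S}_H$, $d_i=\min_{j\in\mathcal{S}_I}d_{ji}$ (taken over $j$ having a path to $i$), and $d_i=+\infty$ if no $j\in\mathcal{S}_I$ has a path to $i$. *)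

(* Defs.v *)
From HB Require Import structures.
From mathcomp Require Import all_boot all_order all_algebra.
Set Implicit Arguments. Unset Strict Implicit. Unset Printing Implicit Defensive.
Import Order.TTheory GRing.Theory Num.Theory.
Local Open Scope ring_scope.

(* Graph on V = 'I_n given by an edge relation E : rel 'I_n;
   E u v means that the directed edge (u,v) (from u to v) is in the edge set.
   Hence N_i = [pred j | E j i] and Nbar_i = [pred j | E j i || (j == i)]. *)

Definition dpath {n : nat} (E : rel 'I_n) (t : nat) (j i : 'I_n) : Prop :=
  exists p : seq 'I_n, size p = t /\ path E j p /\ last j p = i.

Definition dist_nodes {n : nat} (E : rel 'I_n) (j i : 'I_n) (d : nat) : Prop :=
  j != i /\ dpath E d j i /\ (forall t, dpath E t j i -> (d <= t)%N).

Definition has_path {n : nat} (E : rel 'I_n) (j i : 'I_n) : Prop :=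
  j != i /\ exists t, dpath E t j i.

(* d_i = d (finite), where S_I = {j | x0 j > 0}, S_H = {j | x0 j = 0} *)
Definition dist_is {R : numDomainType} {n : nat} (x0 : 'I_n -> R)
  (E : rel 'I_n) (i : 'I_n) (d : nat) : Prop :=
  (0 < x0 i /\ d = 0%N) \/
  (x0 i = 0 /\ (exists j, 0 < x0 j /\ dist_nodes E j i d) /\
    (forall j d', 0 < x0 j -> dist_nodes E j i d' -> (d <= d')%N)).

Definition dist_infinite {R : numDomainType} {n : nat} (x0 : 'I_n -> R)
  (E : rel 'I_n) (i : 'I_n) : Prop :=
  forall j, 0 < x0 j -> ~ has_path E j i.

(* Main.v *)
Require Import Defs.
From HB Require Import structures.
From mathcomp Require Import all_boot all_order all_algebra.
From mathcomp Require Import ring lra.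
From Stdlib Require Import Classical_Prop.
Import Order.TTheory GRing.Theory Num.Theory.
Local Open Scope ring_scope.

Theorem lemma1 (R : realFieldType) (n : nat) (E : rel 'I_n)
  (a : 'I_n -> 'I_n -> R) (h beta delta : R)
  (s x r : nat -> 'I_n -> R)
  (ha_nonneg : forall i j, 0 <= a i j)
  (hs_rec : forall k i, s k.+1 i =
     s k i - h * s k i * beta * \sum_(j | E j i || (j == i)) a i j * x k j)
  (hx_rec : forall k i, x k.+1 i =
     (1 - h * delta) * x k i + h * s k i * beta * \sum_(j | E j i || (j == i)) a i j * x k j)
  (hr_rec : forall k i, r k.+1 i = r k i + h * delta * x k i)
  (hinit : forall i, [/\ 0 < s 0%N i <= 1, 0 <= x 0%N i < 1, r 0%N i = 0 &
                          s 0%N i + x 0%N i = 1])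
  (hh : 0 < h) (hbeta : 0 < beta) (hdelta : 0 < delta) (hhdelta : h * delta < 1)
  (ha_pos : forall i j, i != j -> E j i -> 0 < a i j)
  (hsum : forall i, h * beta * \sum_(j | E j i || (j == i)) a i j < 1) :
  forall i : 'I_n,
    (forall k, 0 < s k i) /\
    (forall d, dist_is (x 0%N) E i d ->
       (forall k, (k < d)%N -> x k i = 0) /\ (forall k, (d <= k)%N -> 0 < x k i < 1)) /\
    (forall d, dist_is (x 0%N) E i d ->
       (forall k, (k <= d)%N -> r k i = 0) /\ (forall k, (d < k)%N -> 0 < r k i < 1)) /\
    (x 0%N i = 0 -> dist_infinite (x 0%N) E i -> forall k, x k i = 0 /\ r k i = 0).
Proof.
pose S k i := \sum_(j | E j i || (j == i)) a i j * x k j.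
have inv : forall k i, [/\ 0 < s k i, 0 <= x k i, 0 <= r k i & s k i + x k i + r k i = 1].
  elim=> [|k IH] i.
    case: (hinit i) => /andP[s0 _] /andP[x0 _] r0 e.
    by split => //; rewrite r0 ?addr0.
  have Sge : 0 <= S k i.
    apply: sumr_ge0 => j _; apply: mulr_ge0 => //; by case: (IH j).
  have Sle : h * beta * S k i < 1.
    apply: (le_lt_trans _ (hsum i)); apply: ler_wpM2l; first by rewrite mulr_ge0 ?ltW.
    rewrite /S; apply: ler_sum => j _. have [sj xj rj ej] := IH j. rewrite ler_piMr //. lra.
  have [si xi ri ei] := IH i.
  rewrite hs_rec hx_rec hr_rec -/(S k i).
  have hd1 : 0 <= 1 - h * delta by lra.
  split.
  - have -> : s k i - h * s k i * beta * S k i = s k i * (1 - h * beta * S k i) by ring.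
    apply: mulr_gt0 => //; lra.
  - have A : 0 <= (1 - h * delta) * x k i by apply: mulr_ge0.
    have B : 0 <= h * s k i * beta * S k i by do ![apply: mulr_ge0 | done | apply: ltW].
    lra.
  - have B : 0 <= h * delta * x k i by do ![apply: mulr_ge0 | done | apply: ltW].
    lra.
  - transitivity (s k i + x k i + r k i); [ring | exact ei].
have step : forall m j v, 0 < x m j -> E j v || (j == v) -> 0 < x m.+1 v.
  move=> m j v xj ejv; rewrite hx_rec -/(S m v).
  have [sv xv rv ev] := inv m v.
  have hd1 : 0 < 1 - h * delta by lra.
  have Sge : 0 <= S m v.
    apply: sumr_ge0 => j' _; apply: mulr_ge0 => //; by case: (inv m j').
  case: (eqVneq j v) => [<-|njv].
    have A : 0 < (1 - h * delta) * x m j by apply: mulr_gt0.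
    have [sj _ _ _] := inv m j.
    have Sgej : 0 <= S m j.
      apply: sumr_ge0 => j' _; apply: mulr_ge0 => //; by case: (inv m j').
    have B : 0 <= h * s m j * beta * S m j.
      by do ![apply: mulr_ge0 | done | apply: ltW].
    lra.
  have Sgt : 0 < S m v.
    rewrite /S (bigD1 j) //=.
    have A : 0 < a v j * x m j.
      apply: mulr_gt0 => //; apply: ha_pos; first by rewrite eq_sym.
      by move: ejv; rewrite (negbTE njv) orbF.
    have B : 0 <= \sum_(i0 | (E i0 v || (i0 == v)) && (i0 != j)) a v i0 * x m i0.
      apply: sumr_ge0 => j' _; apply: mulr_ge0 => //; by case: (inv m j').
    lra.
  have A : 0 <= (1 - h * delta) * x m v by apply: mulr_ge0; lra.
  have B : 0 < h * s m v * beta * S m v by rewrite !mulr_gt0.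
  lra.
have persist : forall m k i, 0 < x m i -> (m <= k)%N -> 0 < x k i.
  move=> m k i xm; elim: k => [|k IHk].
    by rewrite leqn0 => /eqP <-.
  rewrite leq_eqVlt => /orP[/eqP <- //|]; rewrite ltnS => /IHk xk.
  by apply: (step _ i) => //; rewrite eqxx orbT.
have spread : forall p j m, 0 < x m j -> path E j p -> 0 < x (m + size p)%N (last j p).
  elim=> [|v p IH] j m xm /=; first by rewrite addn0.
  move/andP=> [ejv pp].
  have -> : (m + (size p).+1 = m.+1 + size p)%N by rewrite addSn addnS.
  apply: IH pp; apply: (step _ j) => //; by rewrite ejv.
have back : forall k i, 0 < x k i -> exists j t, [/\ 0 < x 0%N j, dpath E t j i & (t <= k)%N].
  elim=> [|k IH] i xk.
    by exists i, 0%N; split => //; exists [::].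
  have [xi0|xipos] := eqVneq (x k i) 0; last first.
    have : 0 < x k i by rewrite lt_def xipos; case: (inv k i).
    move=> /IH [j [t [xj dp tk]]]; exists j, t; split => //; exact: leqW.
  move: xk; rewrite hx_rec xi0 mulr0 add0r => pos.
  have Sgt : 0 < S k i.
    rewrite ltNge; apply/negP => Sle.
    have [si _ _ _] := inv k i.
    have : h * s k i * beta * S k i <= 0.
      by rewrite pmulr_rle0 // !mulr_gt0.
    by rewrite leNgt pos.
  have [j [ej xj]] : exists j, (E j i || (j == i)) /\ 0 < x k j.
    apply: NNPP => nex.
    have : S k i <= 0.
      apply: sumr_le0 => j ej.
      have x0j : x k j <= 0.
        rewrite leNgt; apply/negP => xj; apply: nex; by exists j.
      have := inv k j => -[_ xj _ _].
      have -> : x k j = 0 by apply/eqP; rewrite eq_le x0j xj.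
      by rewrite mulr0.
    by rewrite leNgt Sgt.
  have [eji|nji] := eqVneq j i.
    by move: xj; rewrite eji xi0 ltxx.
  have eji : E j i by move: ej; rewrite (negbTE nji) orbF.
  have [j0 [t [xj0 [p [sp [pp lp]]]] tk]] := IH j xj.
  exists j0, t.+1; split => //.
  exists (rcons p i); rewrite size_rcons sp last_rcons rcons_path pp lp eji.
  by [].
have minp : forall t j i, j != i -> dpath E t j i -> exists d', (d' <= t)%N /\ dist_nodes E j i d'.
  elim/ltn_ind => t IH j i nji dp.
  case: (classic (exists t', (t' < t)%N /\ dpath E t' j i)) => [[t' [lt dp']]|nex].
    have [d' [le dn]] := IH t' lt j i nji dp'.
    by exists d'; split => //; apply: leq_trans le (ltnW lt).
  exists t; split => //; split => //; split => // t' dp'.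
  rewrite leqNgt; apply/negP => lt; apply: nex; by exists t'.
move=> i.
have xzero : forall d, dist_is (x 0%N) E i d -> forall k, (k < d)%N -> x k i = 0.
  move=> d dd k kd.
  have [_ xk _ _] := inv k i.
  apply/eqP; rewrite eq_le xk andbT leNgt; apply/negP => /back [j [t [xj dp tk]]].
  case: dd => [[_ d0]|[xi0 [_ hmin]]]; first by rewrite d0 in kd.
  have nji : j != i by apply/eqP => eji; move: xj; rewrite eji xi0 ltxx.
  have [d' [le dn]] := minp t j i nji dp.
  have := hmin j d' xj dn.
  rewrite leqNgt => /negP; apply.
  apply: leq_ltn_trans le _; exact: leq_ltn_trans tk kd.
have xpos : forall d, dist_is (x 0%N) E i d -> forall k, (d <= k)%N -> 0 < x k i.
  move=> d dd k dk.
  case: dd => [[xi d0]|[xi0 [[j [xj [_ [[p [sp [pp lp]]] _]]]] _]]].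
    exact: persist xi _.
  apply: (persist d) => //.
  by have := spread p j 0%N xj pp; rewrite add0n sp lp.
have rzero : forall d, dist_is (x 0%N) E i d -> forall k, (k <= d)%N -> r k i = 0.
  move=> d dd; elim=> [|k IH] kd; first by case: (hinit i).
  rewrite hr_rec IH ?(ltnW kd) // (xzero d dd k kd); by rewrite mulr0 addr0.
split; first by move=> k; case: (inv k i).
split.
  move=> d dd; split; first exact: xzero.
  move=> k dk; rewrite (xpos d dd k dk) /=.
  have [si xi ri ei] := inv k i; lra.
split.
  move=> d dd; split; first exact: rzero.
  move=> k dk.
  have rp : 0 < r k i.
    elim: k dk => [//|k IH]; rewrite ltnS => dk.
    rewrite hr_rec.
    have xk := xpos d dd k dk.
    have [_ _ rk _] := inv k i.
    have : 0 < h * delta * x k i by rewrite !mulr_gt0.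
    lra.
  rewrite rp /=; have [si xi ri ei] := inv k i; lra.
move=> xi0 dinf.
have xz : forall k, x k i = 0.
  move=> k; have [_ xk _ _] := inv k i.
  apply/eqP; rewrite eq_le xk andbT leNgt; apply/negP => /back [j [t [xj dp tk]]].
  have nji : j != i by apply/eqP => eji; move: xj; rewrite eji xi0 ltxx.
  apply: (dinf j xj); split => //; by exists t.
move=> k; split => //.
elim: k => [|k IH]; first by case: (hinit i).
by rewrite hr_rec IH xz mulr0 addr0.
Qed.
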